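(* Let $\Pi=\Pi_1\times\cdots\times\Pi_T$ be a class of dynamic treatment regimes. For any integers $s,t$ with $1\le s\le t\le T$ and any $\epsilon>0$, $$N_{d_h}\big((t-s+1)\epsilon,\Pi_{s:t}\big)\le\prod_{\ell=s}^tN_{d_h}(\epsilon,\Pi_\ell).$$
   Context: For each stage $t$, $\mathcal{H}_t$ is a history space with elements $h_t=(\underline a_{t-1},\underline s_t)$; for $\ell\le t$ the sub-history is $h_\ell=(\underline a_{\ell-1},\underline s_\ell)\in\mathcal{H}_\ell$. $\Pi_t$ is a class of measurable maps $\pi_t:\mathcal{H}_t\to\mathcal{A}_t$ (finite action set), $\Pi_{s:t}=\Pi_s\times\cdots\times\Pi_t$ with elements $\pi_{s:t}=(\pi_s,\dots,\pi_t)$. Given points $h_t^{(1)},\dots,h_t^{(n)}\in\mathcal{H}_t$, the Hamming distance is $d_h(\pi_{s:t},\pi'_{s:t})=n^{-1}\sum_{i=1}^n\mathbf{1}\{\pi_s(h_s^{(i)})\ne\pi'_s(h_s^{(i)})\vee\cdots\vee\pi_t(h_t^{(i)})\ne\pi'_t(h_t^{(i)})\}$; $N_{d_h}(\epsilon,\Pi_{s:t},\{h_t^{(i)}\})$ is the smallest number of elements $\pi^{(1)}_{s:t},\pi^{(2)}_{s:t},\dots$ of $\Pi_{s:t}$ such that every $\pi_{s:t}\in\Pi_{s:t}$ has some $\pi^{(j)}_{s:t}$ with $d_h(\pi_{s:t},\pi^{(j)}_{s:t})\le\epsilon$; the $\epsilon$-Hamming covering number $N_{d_h}(\epsilon,\Pi_{s:t})$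 is its supremum over all $n\ge1$ and $h_t^{(1)},\dots,h_t^{(n)}\in\mathcal{H}_t$; $N_{d_h}(\epsilon,\Pi_{t:t})=N_{d_h}(\epsilon,\Pi_t)$. *)

(* Defs.v *)
From HB Require Import structures.
From mathcomp Require Import all_boot all_order all_algebra.
From mathcomp Require Import all_classical all_reals ereal.
Unset Printing Implicit Defensive.
Import Order.TTheory GRing.Theory Num.Theory.
Local Open Scope classical_set_scope.
Local Open Scope ring_scope.

Section Covering.
Variable R : realType.

Definition covnum (X : Type) (C : set X) (d : X -> X -> R) (eps : R) : \bar R :=
  ereal_inf [set (k%:R)%:E | k in
    [set k : nat | exists c : 'I_k -> X,
        (forall j, C (c j)) /\ (forall x, C x -> exists j, d x (c j) <= eps)]].

(* Stages are natural numbers; H l is the history space of stage l,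
   A l the finite action set, and proj l t : H t -> H l extracts the
   sub-history h_l from h_t (used for l <= t). *)
Variables (H : nat -> Type) (A : nat -> finType)
          (proj : forall l t : nat, H t -> H l).

Definition dh1 (l n : nat) (pts : 'I_n -> H l) (p q : H l -> A l) : R :=
  (n%:R)^-1 * (#|[set i : 'I_n | p (pts i) != q (pts i)]|)%:R.

Definition stages (s t : nat) := {l : nat | (s <= l <= t)%N}.

Definition policy_tuple (s t : nat) :=
  forall l : stages s t, H (sval l) -> A (sval l).

Definition Pi_range (Pi : forall l, set (H l -> A l)) (s t : nat)
  : set (policy_tuple s t) :=
  [set pi | forall l : stages s t, Pi (sval l) (pi l)].

Definition dh_range (s t n : nat) (pts : 'I_n -> H t) (p q : policy_tuple s t) : R :=
  (n%:R)^-1 * (#|[set i : 'I_n |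
     `[< exists l : stages s t,
           p l (proj (sval l) t (pts i)) != q l (proj (sval l) t (pts i)) >]]|)%:R.

Definition N_range (Pi : forall l, set (H l -> A l)) (s t : nat) (eps : R) : \bar R :=
  ereal_sup [set e | exists (n : nat) (pts : 'I_n -> H t),
     (0 < n)%N /\ e = covnum _ (Pi_range Pi s t) (dh_range s t n pts) eps].

Definition N_stage (Pi : forall l, set (H l -> A l)) (l : nat) (eps : R) : \bar R :=
  ereal_sup [set e | exists (n : nat) (pts : 'I_n -> H l),
     (0 < n)%N /\ e = covnum _ (Pi l) (dh1 l n pts) eps].

End Covering.

(* Main.v *)
Require Import Defs.
From mathcomp Require Import all_boot all_order all_algebra.
From mathcomp Require Import all_classical all_reals ereal.
From mathcomp Require Import zify.
Import Order.TTheory GRing.Theory Num.Theory.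
Local Open Scope ring_scope.

Section H.
Variable R : realType.
Local Open Scope classical_set_scope.

Lemma covnum_ge0 X (C : set X) (d : X -> X -> R) e : (0 <= covnum R X C d e)%E.
Proof.
apply: le_ereal_inf_tmp => _ [k _ <-]; by rewrite lee_fin ler0n.
Qed.

Lemma covnum_le_card X (C : set X) (d : X -> X -> R) e (F : finType) (c : F -> X) :
  (forall j, C (c j)) -> (forall x, C x -> exists j, d x (c j) <= e) ->
  (covnum R X C d e <= (#|F|%:R)%:E)%E.
Proof.
move=> hC hx; apply: ereal_inf_lbound; exists #|F| => //.
exists (c \o enum_val); split => [j|x /hx [j hj]]; first exact: hC.
by exists (enum_rank j); rewrite /= enum_rankK.
Qed.

Lemma covnum_empty X (C : set X) (d : X -> X -> R) e :
  (forall x, ~ C x) -> (covnum R X C d e <= 0)%E.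
Proof.
move=> hC; apply: ereal_inf_lbound; exists 0%N => //.
have c : 'I_0 -> X by case=> m; rewrite ltn0.
by exists c; split => [j|x /hC] //; have := ltn_ord j; rewrite ltn0.
Qed.

Lemma covnum_ge1 X (C : set X) (d : X -> X -> R) e :
  (exists x, C x) -> (1 <= covnum R X C d e)%E.
Proof.
move=> [x Cx]; apply: le_ereal_inf_tmp => _ [k [c [_ hc]] <-].
rewrite lee_fin ler1n lt0n; apply/eqP => k0; subst k.
by case: (hc x Cx) => j _; have := ltn_ord j; rewrite ltn0.
Qed.

Lemma covnum_fin X (C : set X) (d : X -> X -> R) e :
  (covnum R X C d e < +oo)%E ->
  exists k (c : 'I_k -> X), ((forall j, C (c j)) /\
     (forall x, C x -> exists j, d x (c j) <= e)) /\
     covnum R X C d e = (k%:R)%:E.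
Proof.
set S := [set k : nat | exists c : 'I_k -> X,
        (forall j, C (c j)) /\ (forall x, C x -> exists j, d x (c j) <= e)].
move=> hlt.
have exS : exists k, `[< S k >].
  apply: contrapT => hn; move: hlt; rewrite /covnum -/S.
  suff -> : [set (k%:R)%:E | k in S] = set0 :> set (\bar R) by rewrite ereal_inf0.
  apply/seteqP; split => // x [k Sk _]; apply: hn; exists k; exact/asboolP.
case: (@ex_minnP (fun k => `[< S k >]) exS) => m /asboolP Sm hmin.
exists m; case: Sm => c hc; exists c; split => //.
apply/le_anti/andP; split.
  by apply: ereal_inf_lbound; exists m => //; exists c.
apply: le_ereal_inf_tmp => _ [k Sk <-]; rewrite lee_fin ler_nat; apply: hmin.
exact/asboolP.
Qed.

Lemma prod_ge1 (F : nat -> \bar R) s t :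
  (forall l, (s <= l < t)%N -> (1 <= F l)%E) ->
  (1 <= \big[mule/1%E]_(s <= l < t) F l)%E.
Proof.
move=> h; rewrite big_nat; apply: (big_ind (fun x => 1 <= x)%E) => //.
move=> x y hx hy; rewrite -[1%E]mule1; apply: lee_pmul => //.
Qed.

Lemma factor_le_prod (F : nat -> \bar R) s t l0 :
  (forall l, (s <= l < t)%N -> (1 <= F l)%E) -> (s <= l0 < t)%N ->
  (F l0 <= \big[mule/1%E]_(s <= l < t) F l)%E.
Proof.
move=> h /andP[h1 h2].
rewrite (@big_cat_nat _ _ _ l0) //=; last exact: ltnW.
rewrite [X in (_ <= _ * X)%E]big_ltn //=.
have A1 : (1 <= \big[mule/1%E]_(s <= l < l0) F l)%E.
  apply: prod_ge1 => l /andP[? ?]; apply: h; apply/andP; split; lia.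
have A2 : (1 <= \big[mule/1%E]_(l0.+1 <= l < t) F l)%E.
  apply: prod_ge1 => l /andP[? ?]; apply: h; apply/andP; split; lia.
have A0 : (1 <= F l0)%E by apply: h; rewrite h1.
have A0' : (0 <= F l0)%E by exact: le_trans A0.
apply: le_trans (lee_pmul _ _ A1 (lee_pmul A0' _ (lexx (F l0)) A2)) => //.
by rewrite mul1e mule1.
by rewrite mule1.
Qed.

Lemma lee_prod_nat (F G : nat -> \bar R) s t :
  (forall l, (s <= l < t)%N -> (0 <= F l)%E /\ (F l <= G l)%E) ->
  (\big[mule/1%E]_(s <= l < t) F l <= \big[mule/1%E]_(s <= l < t) G l)%E.
Proof.
move=> h; rewrite !big_nat.
suff : (0 <= \big[mule/1%E]_(s <= i < t | (s <= i < t)%N) F i)%E /\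
  (\big[mule/1%E]_(s <= i < t | (s <= i < t)%N) F i <=
   \big[mule/1%E]_(s <= i < t | (s <= i < t)%N) G i)%E by case.
apply: (big_ind2 (fun x y => (0 <= x)%E /\ (x <= y)%E)) => //.
move=> x1 x2 y1 y2 [h1 h2] [h3 h4]; split; first exact: mule_ge0.
exact: lee_pmul.
Qed.
End H.

Lemma in_bigcup_seq (T : finType) (I : eqType) (r : seq I) (S : I -> {set T}) x l :
  l \in r -> x \in S l -> x \in \bigcup_(j <- r) S j.
Proof.
elim: r => // a r IH; rewrite inE big_cons finset.in_setU => /orP[/eqP <- ->//|/IH h /h ->].
by rewrite orbT.
Qed.

Theorem lemma6 (R : realType) (H : nat -> Type) (A : nat -> finType)
    (proj : forall l t : nat, H t -> H l)
    (Pi : forall l : nat, set (H l -> A l)) (T s t : nat) (eps : R) :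
  (1 <= s)%N -> (s <= t)%N -> (t <= T)%N -> 0 < eps ->
  (N_range R H A proj Pi s t ((t - s + 1)%:R * eps)
    <= \big[mule/1%E]_(s <= l < t.+1) N_stage R H A Pi l eps)%E.
Proof.
move=> _ hst _ he.
rewrite /N_range; apply: ge_ereal_sup => _ [n [pts [n0 ->]]].
set P := (\big[mule/1%E]_(s <= l < t.+1) N_stage R H A Pi l eps).
pose ptsl (l : nat) : 'I_n -> H l := fun i => proj l t (pts i).
have Nge l : (covnum R _ (Pi l) (dh1 R H A l n (ptsl l)) eps <= N_stage R H A Pi l eps)%E.
  by apply: ereal_sup_ubound; exists n, (ptsl l).
have [[l0 [hl0 hE]]|hne] := pselect (exists l0, (s <= l0 <= t)%N /\ forall x, ~ Pi l0 x).
  apply: (le_trans (covnum_empty _ _ _ _ _ _)).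
    by move=> x hx; exact: hE (hx (exist _ l0 hl0)).
  apply: prode_ge0 => l _; exact: le_trans (covnum_ge0 _ _ _ _ _) (Nge l).
have ne l : (s <= l <= t)%N -> exists x, Pi l x.
  move=> hl; apply: contrapT => hn; apply: hne; exists l; split => // x hx; apply: hn; by exists x.
have N1 l : (s <= l < t.+1)%N -> (1 <= N_stage R H A Pi l eps)%E.
  move=> hl; apply: le_trans (Nge l); apply: covnum_ge1; exact: ne.
have [Pinf|Pfin] := eqVneq P +oo%E; first by rewrite Pinf leey.
have Plt : (P < +oo)%E by rewrite ltey.
have fin l : (s <= l <= t)%N -> exists k (c : 'I_k -> H l -> A l),
    ((forall j, Pi l (c j)) /\
     (forall x, Pi l x -> exists j, dh1 R H A l n (ptsl l) x (c j) <= eps)) /\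
    ((k%:R)%:E <= N_stage R H A Pi l eps)%E.
  move=> hl.
  have hlt : (covnum R _ (Pi l) (dh1 R H A l n (ptsl l)) eps < +oo)%E.
    apply: le_lt_trans (Nge l) (le_lt_trans (factor_le_prod _ _ _ _ _ N1 _) Plt).
    by rewrite ltnS.
  have [k [c [hc hk]]] := covnum_fin _ _ _ _ _ hlt.
  by exists k, c; split => //; rewrite -hk.
have X l : exists k (c : 'I_k -> H l -> A l), (s <= l <= t)%N ->
    ((forall j, Pi l (c j)) /\
     (forall x, Pi l x -> exists j, dh1 R H A l n (ptsl l) x (c j) <= eps)) /\
    ((k%:R)%:E <= N_stage R H A Pi l eps)%E.
  case: (boolP (s <= l <= t)%N) => hl.
    by have [k [c hc]] := fin l hl; exists k, c.
  have c : 'I_0 -> H l -> A l by move=> j; have := ltn_ord j; rewrite ltn0.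
  by exists 0%N, c => hl'; move/negP: hl.
pose K l := sval (cid (X l)).
pose G l : 'I_(K l) -> H l -> A l := sval (cid (svalP (cid (X l)))).
have GP l : (s <= l <= t)%N ->
    ((forall j, Pi l (G l j)) /\
     (forall x, Pi l x -> exists j, dh1 R H A l n (ptsl l) x (G l j) <= eps)) /\
    (((K l)%:R)%:E <= N_stage R H A Pi l eps)%E.
  exact: (svalP (cid (svalP (cid (X l))))).
pose kk (i : nat) := if (s <= i)%N then K i else 1%N.
have Ekk (l : stages s t) : kk (sval l) = K (sval l).
  by rewrite /kk; case/andP: (svalP l) => ->.
have LT (l : stages s t) : (sval l < t.+1)%N by case/andP: (svalP l).
pose F := {dffun forall i : 'I_t.+1, 'I_(kk i)}.
pose cov (f : F) : policy_tuple H A s t :=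
  fun l => G (sval l) (cast_ord (Ekk l) (f (Ordinal (LT l)))).
have cardF : #|F| = (\prod_(s <= l < t.+1) K l)%N.
  rewrite card_dep_ffun foldrE big_map big_enum /=.
  rewrite (eq_bigr (fun i : 'I_t.+1 => kk i)); last by move=> i _; rewrite card_ord.
  rewrite -(big_mkord xpredT kk) (@big_cat_nat _ _ _ s) //=; last exact: leqW.
  rewrite big1_seq ?mul1n; last first.
    by move=> i /andP[_]; rewrite mem_index_iota => /andP[_ hi]; rewrite /kk leqNgt hi.
  apply: eq_big_nat => i /andP[hi _]; by rewrite /kk hi.
apply: le_trans; first apply: (covnum_le_card _ _ _ _ _ _ cov).
- move=> f l; by case: (GP _ (svalP l)) => [[hc _] _]; apply: hc.
- move=> pi hpi.
  have ex (i : 'I_t.+1) : exists y : 'I_(kk i), forall (p : (s <= i <= t)%N) (e : kk i = K i),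
      dh1 R H A i n (ptsl i) (pi (exist _ (nat_of_ord i) p)) (G i (cast_ord e y)) <= eps.
    have /orP[hsi|hsi] := orbN (s <= i)%N.
      have p : (s <= i <= t)%N by rewrite hsi -ltnS ltn_ord.
      have e0 : kk i = K i by rewrite /kk hsi.
      case: (GP i p) => [[_ hcov] _].
      case: (hcov _ (hpi (exist _ (nat_of_ord i) p))) => j hj.
      exists (cast_ord (esym e0) j) => p' e; rewrite (bool_irrelevance p' p).
      suff -> : cast_ord e (cast_ord (esym e0) j) = j by [].
      exact: val_inj.
    have e1 : kk i = 1%N by rewrite /kk (negbTE hsi).
    exists (cast_ord (esym e1) ord0) => p; have /andP[h _] := p; by rewrite h in hsi.
  pose f : F := finfun (fun i : 'I_t.+1 => sval (cid (ex i))).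
  exists f.
  rewrite /dh_range.
  pose S l : {set 'I_n} := [set i | `[< forall p : (s <= l <= t)%N,
      pi (exist _ l p) (ptsl l i) != cov f (exist _ l p) (ptsl l i) >] && (s <= l <= t)%N].
  apply: le_trans (_ : _ <= n%:R^-1 * (\sum_(l <- index_iota s t.+1) #|S l|)%:R) _.
    rewrite ler_wpM2l ?invr_ge0 ?ler0n // ler_nat.
    apply: leq_trans; last exact: unstable.card_big_setU.
    apply: subset_leq_card; apply/fintype.subsetP => i.
    rewrite in_setE /= => /asboolP [[l p] hd].
    apply: (in_bigcup_seq _ _ _ S i l); first by rewrite mem_index_iota ltnS.
    rewrite inE; apply/andP; split => //; apply/asboolP => p'; by rewrite (bool_irrelevance p' p).
  rewrite natr_sum mulr_sumr.
  apply: le_trans (_ : _ <= \sum_(l <- index_iota s t.+1) eps) _.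
    rewrite !big_seq; apply: ler_sum => l; rewrite mem_index_iota => hl.
    have p : (s <= l <= t)%N by move: hl; rewrite ltnS.
    have := svalP (cid (ex (Ordinal (LT (exist _ l p))))) p (Ekk (exist _ l p)).
    rewrite /dh1 => hd; apply: le_trans hd.
    rewrite ler_wpM2l ?invr_ge0 ?ler0n // ler_nat.
    apply: subset_leq_card; apply/fintype.subsetP => i; rewrite !inE => /andP[/asboolP hx _].
    by have := hx p; rewrite /cov ffunE.
  by rewrite sumr_const_nat addn1 subSn // mulr_natl.
have cF : (((#|F|)%:R)%:E = ((\prod_(s <= l < t.+1) K l)%N%:R)%:E :> \bar R)%E by rewrite cardF.
rewrite cF natr_prod -prodEFin; apply: lee_prod_nat => l hl.
split; first by rewrite lee_fin ler0n.
by case: (GP l hl).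
Qed.
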